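(* Let $D\subset\mathbb N$ and let $g_1,g_2:D\to\mathbb R$ satisfy $g_2(n)\ge g_1(n)$ for all $n\in D$, $\lim_{n\to\infty}g_1(n)=\infty$ and $\lim_{n\to\infty}g_2(n)/n=0$. Let $f:D\to\mathbb R$ be such that there is $n_0\in D$ with $f(n)\ge g_1(n)$ for all $n\in D$, $n\ge n_0$, and suppose $f(n)\le g_2(n)$ for infinitely many $n\in D$. Then $\Omega(f)\ne\emptyset$, the slope set $A_f=\{a_1,\dots,a_k\}$ is finite, and $$a_1<a_2<\cdots<a_k=0.$$
   Context: Let $D=\{x_0<x_1<x_2<\cdots\}\subset\mathbb R$ be a strictly increasing sequence (finite or infinite) and $f:D\to\mathbb R$. A function $h:D\to\mathbb R$ is convex on $D$ if $h(x)\le \frac{(b-x)h(a)+(x-a)h(b)}{b-a}$ for all $a<x<b$ in $D$. Let $\Omega(f)$ be the set of convex $h:D\to\mathbb R$ with $h\le f$ on $D$. If $\Omega(f)\ne\emptyset$, the lower convex envelope of $f$ is $\breve f(x):=\sup\{h(x):h\in\Omega(f)\}$, a piecewise linear convex function on $D$. Its vertex set $H_f=\{m_0=x_0<m_1<m_2<\cdots\}\subset D$ consists of $x_0$ together with the points of $D$ at which $\breve f=f$ and $\breve f$ changes slope, so that $\breve f$ is linear on $D\cap[m_{i-1},m_i]$ for each $i$. The slope set $A_f=\{a_1<a_2<\cdots\}$ consists of the slopes $a_i=\frac{f(m_i)-f(m_{i-1})}{m_i-m_{i-1}}$ of $\breve f$ on $[m_{i-1},m_i]$; if $D$ is infinite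 and $H_f=\{m_0,\dots,m_k\}$ is finite, then $\breve f$ is linear on $D\cap[m_k,\infty)$ and $A_f=\{a_1,\dots,a_k,a_{k+1}\}$, where $a_{k+1}$ is the slope of $\breve f$ on $D\cap[m_k,\infty)$. *)

(* Defs.v *)
From Stdlib Require Import Reals Lra Lia.
Open Scope R_scope.

(* D : nat -> Prop is a subset of N; functions are nat -> R, only values on D matter. *)

Definition convex_on (D : nat -> Prop) (h : nat -> R) : Prop :=
  forall a x b : nat, D a -> D x -> D b -> (a < x)%nat -> (x < b)%nat ->
    h x <= ((INR b - INR x) * h a + (INR x - INR a) * h b) / (INR b - INR a).

Definition in_Omega (D : nat -> Prop) (f h : nat -> R) : Prop :=
  convex_on D h /\ forall x, D x -> h x <= f x.

Definition Omega_nonempty (D : nat -> Prop) (f : nat -> R) : Prop :=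
  exists h, in_Omega D f h.

Definition is_envelope (D : nat -> Prop) (f e : nat -> R) : Prop :=
  forall x, D x -> is_lub (fun y => exists h, in_Omega D f h /\ y = h x) (e x).

Definition slope (e : nat -> R) (p q : nat) : R := (e q - e p) / (INR q - INR p).

Definition is_min_of (D : nat -> Prop) (x0 : nat) : Prop :=
  D x0 /\ forall x, D x -> (x0 <= x)%nat.

Definition D_succ (D : nat -> Prop) (p q : nat) : Prop :=
  D p /\ D q /\ (p < q)%nat /\ forall x, D x -> ~ (p < x < q)%nat.

Definition vertex (D : nat -> Prop) (f e : nat -> R) (m : nat) : Prop :=
  is_min_of D m \/
  (D m /\ e m = f m /\
   exists p s, D_succ D p m /\ D_succ D m s /\ slope e p m <> slope e m s).

Definition consec_vertices (D : nat -> Prop) (f e : nat -> R) (m m' : nat) : Prop :=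
  vertex D f e m /\ vertex D f e m' /\ (m < m')%nat /\
  forall x, vertex D f e x -> ~ (m < x < m')%nat.

Definition vertices_finite (D : nat -> Prop) (f e : nat -> R) : Prop :=
  exists N, forall m, vertex D f e m -> (m <= N)%nat.

Definition slope_set (D : nat -> Prop) (f e : nat -> R) (a : R) : Prop :=
  (exists m m', consec_vertices D f e m m' /\
      a = (f m' - f m) / (INR m' - INR m)) \/
  (vertices_finite D f e /\
   exists mk s, vertex D f e mk /\ (forall m, vertex D f e m -> (m <= mk)%nat) /\
     D_succ D mk s /\ a = slope e mk s).

(* Main.v *)
Require Import Defs.
From Stdlib Require Import Reals Lra Lia Arith Wf_nat ZArith Classical ClassicalEpsilon.
Open Scope R_scope.

Lemma div_le (P Q u w : R) : 0 < u -> 0 < w -> P * w <= Q * u -> P / u <= Q / w.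
Proof.
  intros Hu Hw H.
  apply Rmult_le_reg_r with (u*w). nra.
  replace (P / u * (u * w)) with (P*w) by (field; lra).
  replace (Q / w * (u * w)) with (Q*u) by (field; lra). exact H.
Qed.

Lemma INR_lt (a b : nat) : (a < b)%nat -> INR a < INR b.
Proof. intros; apply lt_INR; auto. Qed.

Lemma INR_diff1 (a b : nat) : (a < b)%nat -> 1 <= INR b - INR a.
Proof.
  intros H. rewrite <- minus_INR by lia.
  replace 1 with (INR 1) by reflexivity. apply le_INR. lia.
Qed.

Lemma interp_mono (a x b : nat) (A B A' B' : R) : (a < x)%nat -> (x < b)%nat ->
  A <= A' -> B <= B' ->
  ((INR b - INR x) * A + (INR x - INR a) * B) / (INR b - INR a) <=
  ((INR b - INR x) * A' + (INR x - INR a) * B') / (INR b - INR a).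
Proof.
  intros H1 H2 HA HB. pose proof (INR_lt _ _ H1). pose proof (INR_lt _ _ H2).
  unfold Rdiv; apply Rmult_le_compat_r.
  - left; apply Rinv_0_lt_compat; lra.
  - assert ((INR b - INR x) * A <= (INR b - INR x) * A') by (apply Rmult_le_compat_l; lra).
    assert ((INR x - INR a) * B <= (INR x - INR a) * B') by (apply Rmult_le_compat_l; lra).
    lra.
Qed.

Lemma conv_mul D e a x b : convex_on D e -> D a -> D x -> D b -> (a<x)%nat -> (x<b)%nat ->
  e x * (INR b - INR a) <= (INR b - INR x) * e a + (INR x - INR a) * e b.
Proof.
  intros Hc Ha Hx Hb H1 H2. pose proof (INR_lt _ _ H1). pose proof (INR_lt _ _ H2).
  pose proof (Hc a x b Ha Hx Hb H1 H2) as HH.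
  apply Rmult_le_compat_r with (r := INR b - INR a) in HH; [|lra].
  replace ( ((INR b - INR x) * e a + (INR x - INR a) * e b) / (INR b - INR a) *
      (INR b - INR a)) with ((INR b - INR x) * e a + (INR x - INR a) * e b) in HH
    by (field; lra). exact HH.
Qed.

Lemma sl_left D e a x b : convex_on D e -> D a -> D x -> D b -> (a<x)%nat -> (x<b)%nat ->
  slope e a x <= slope e a b.
Proof.
  intros Hc Ha Hx Hb H1 H2. pose proof (INR_lt _ _ H1). pose proof (INR_lt _ _ H2).
  pose proof (conv_mul D e a x b Hc Ha Hx Hb H1 H2).
  unfold slope; apply div_le; lra.
Qed.

Lemma sl_right D e a x b : convex_on D e -> D a -> D x -> D b -> (a<x)%nat -> (x<b)%nat ->
  slope e a b <= slope e x b.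
Proof.
  intros Hc Ha Hx Hb H1 H2. pose proof (INR_lt _ _ H1). pose proof (INR_lt _ _ H2).
  pose proof (conv_mul D e a x b Hc Ha Hx Hb H1 H2).
  unfold slope; apply div_le; lra.
Qed.

Lemma sl_mid D e a x b : convex_on D e -> D a -> D x -> D b -> (a<x)%nat -> (x<b)%nat ->
  slope e a x <= slope e x b.
Proof.
  intros. eapply Rle_trans; [eapply sl_left|eapply sl_right]; eauto.
Qed.

Lemma slope_eq e a b : (a < b)%nat -> e b = e a + slope e a b * (INR b - INR a).
Proof. intros H. pose proof (INR_lt _ _ H). unfold slope. field. lra. Qed.

Lemma least_nat (P : nat -> Prop) : (exists n, P n) -> exists n, P n /\ forall m, P m -> (n <= m)%nat.
Proof.
  intros [n Hn]. revert Hn. induction n as [n IH] using (well_founded_induction lt_wf). intros Hn.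
  destruct (classic (exists m, (m < n)%nat /\ P m)) as [[m [Hm1 Hm2]]|Hno].
  - exact (IH m Hm1 Hm2).
  - exists n; split; auto. intros m Hm. destruct (le_lt_dec n m); auto.
    exfalso; apply Hno; eauto.
Qed.

Lemma pred_ex D a b : D a -> D b -> (a < b)%nat -> exists p, D_succ D p b /\ (a <= p)%nat.
Proof.
  intros Ha Hb Hab.
  assert (Hex : exists t, D (b - 1 - t)%nat /\ (t <= b - 1 - a)%nat).
  { exists (b - 1 - a)%nat. split; [replace (b-1-(b-1-a))%nat with a by lia; auto | lia]. }
  destruct (least_nat _ Hex) as [t [[Ht1 Ht2] Hmin]].
  exists (b - 1 - t)%nat. split; [|lia].
  unfold D_succ. split; [auto|]. split; [auto|]. split; [lia|].
  intros y Hy [Hy1 Hy2].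
  assert (Hq := Hmin (b - 1 - y)%nat). assert (D (b - 1 - (b - 1 - y))%nat) as Hd
    by (replace (b - 1 - (b - 1 - y))%nat with y by lia; auto).
  assert (Hl : (b - 1 - y <= b - 1 - a)%nat) by lia.
  specialize (Hq (conj Hd Hl)). lia.
Qed.

Lemma succ_ex D a : (forall N, exists n, D n /\ (n >= N)%nat) -> D a -> exists s, D_succ D a s.
Proof.
  intros Hinf Ha.
  assert (Hex : exists n, D n /\ (n > a)%nat).
  { destruct (Hinf (S a)) as [n [Hn1 Hn2]]. exists n; split; auto. }
  destruct (least_nat _ Hex) as [s [[Hs1 Hs2] Hmin]].
  exists s. unfold D_succ. split; auto. split; auto. split; auto. intros x Hx [Hx1 Hx2].
  specialize (Hmin x (conj Hx Hx1)). lia.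
Qed.

Lemma affine_convex D (al be : R) : convex_on D (fun x => al + be * INR x).
Proof.
  intros a x b _ _ _ H1 H2. pose proof (INR_lt _ _ H1). pose proof (INR_lt _ _ H2).
  right. field. lra.
Qed.

Lemma max_convex D h1 h2 : convex_on D h1 -> convex_on D h2 ->
  convex_on D (fun x => Rmax (h1 x) (h2 x)).
Proof.
  intros C1 C2 a x b Ha Hx Hb H1 H2. apply Rmax_lub.
  - eapply Rle_trans; [exact (C1 a x b Ha Hx Hb H1 H2)|]. apply interp_mono; auto; apply Rmax_l.
  - eapply Rle_trans; [exact (C2 a x b Ha Hx Hb H1 H2)|]. apply interp_mono; auto; apply Rmax_r.
Qed.

Lemma nat_large (K : R) : exists N, forall n, (n >= N)%nat -> K <= INR n.
Proof.
  destruct (archimed K) as [H1 _].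
  exists (Z.to_nat (up K)). intros n Hn.
  destruct (Z_le_gt_dec 0 (up K)) as [Hz|Hz].
  - apply le_INR in Hn. rewrite INR_IZR_INZ in Hn. rewrite Z2Nat.id in Hn by auto. lra.
  - apply Z.gt_lt, IZR_lt in Hz. pose proof (pos_INR n). lra.
Qed.

Definition envp D f e := convex_on D e /\ (forall x, D x -> e x <= f x) /\
  (forall h, in_Omega D f h -> forall x, D x -> h x <= e x).

Lemma env_props D f e : is_envelope D f e -> envp D f e.
Proof.
  intros He. split; [|split].
  - intros a x b Ha Hx Hb H1 H2. destruct (He x Hx) as [Hub Hlst]. apply Hlst.
    intros y [h [Hh ->]]. eapply Rle_trans; [exact (proj1 Hh a x b Ha Hx Hb H1 H2)|].
    apply interp_mono; auto.
    + apply (proj1 (He a Ha)). exists h; auto.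
    + apply (proj1 (He b Hb)). exists h; auto.
  - intros x Hx. apply (proj2 (He x Hx)). intros y [h [Hh ->]]. apply (proj2 Hh); auto.
  - intros h Hh x Hx. apply (proj1 (He x Hx)). exists h; auto.
Qed.

Lemma Kmin D f e x0 : envp D f e -> is_min_of D x0 -> e x0 = f x0.
Proof.
  intros [Hc [Hle Hmax]] [Hx0 Hmin].
  set (h := fun x => if Nat.eq_dec x x0 then f x0 else e x).
  assert (Heh : forall x, D x -> e x <= h x).
  { intros x Hx. unfold h. destruct (Nat.eq_dec x x0); [subst; auto|lra]. }
  assert (Hin : in_Omega D f h).
  { split.
    - intros a x b Ha Hx Hb H1 H2. assert (x <> x0) by (pose proof (Hmin a Ha); lia).
      unfold h at 1. destruct (Nat.eq_dec x x0); [contradiction|].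
      eapply Rle_trans; [exact (Hc a x b Ha Hx Hb H1 H2)|]. apply interp_mono; auto.
    - intros x Hx. unfold h. destruct (Nat.eq_dec x x0); [subst; lra|auto]. }
  pose proof (Hmax h Hin x0 Hx0). pose proof (Hle x0 Hx0). unfold h in H.
  destruct (Nat.eq_dec x0 x0); [lra|contradiction].
Qed.

Lemma lin_right D e m s x : convex_on D e -> D_succ D m s -> D x -> (m < x)%nat ->
  e m + slope e m s * (INR x - INR m) <= e x.
Proof.
  intros Hc [Hm [Hs [Hms Hno]]] Hx Hmx.
  assert (Hsx : (s <= x)%nat) by (destruct (le_lt_dec s x); auto; exfalso; apply (Hno x); auto).
  pose proof (INR_lt _ _ Hmx).
  rewrite (slope_eq e m x Hmx).
  destruct (Nat.eq_dec s x) as [->|Hne]; [lra|].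
  pose proof (sl_left D e m s x Hc Hm Hs Hx Hms ltac:(lia)).
  apply Rplus_le_compat_l. apply Rmult_le_compat_r; lra.
Qed.

Lemma lin_left D e p m x : convex_on D e -> D_succ D p m -> D x -> (x < m)%nat ->
  e m - slope e p m * (INR m - INR x) <= e x.
Proof.
  intros Hc [Hp [Hm [Hpm Hno]]] Hx Hxm.
  assert (Hxp : (x <= p)%nat) by (destruct (le_lt_dec x p); auto; exfalso; apply (Hno x); auto).
  pose proof (INR_lt _ _ Hxm).
  rewrite (slope_eq e x m Hxm).
  destruct (Nat.eq_dec x p) as [->|Hne]; [lra|].
  pose proof (sl_right D e x p m Hc Hx Hp Hm ltac:(lia) Hpm).
  assert (slope e x m * (INR m - INR x) <= slope e p m * (INR m - INR x))
    by (apply Rmult_le_compat_r; lra).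
  lra.
Qed.

Lemma Kink D f e p m s : envp D f e -> D_succ D p m -> D_succ D m s ->
  slope e p m < slope e m s -> e m = f m.
Proof.
  intros HE Hp Hs Hlt. pose proof HE as [Hc [Hle Hmax]].
  assert (Hm : D m) by (destruct Hs; auto).
  destruct (Rle_lt_or_eq_dec _ _ (Hle m Hm)) as [Hl|]; auto. exfalso.
  set (s1 := slope e p m). set (s2 := slope e m s). set (t := (s1 + s2) / 2).
  set (d := Rmin (f m - e m) ((s2 - s1) / 2)).
  assert (Hd : 0 < d) by (unfold d; apply Rmin_glb_lt; unfold s1, s2 in *; lra).
  assert (Hd1 : d <= f m - e m) by apply Rmin_l.
  assert (Hd2 : d <= (s2 - s1) / 2) by apply Rmin_r.
  set (L := fun x => (e m + d - t * INR m) + t * INR x).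
  set (h := fun x => Rmax (e x) (L x)).
  assert (HL : forall x, D x -> x <> m -> L x <= e x).
  { intros x Hx Hne. unfold L. destruct (Nat.lt_total x m) as [Hxm|[->|Hmx]]; [|contradiction|].
    - pose proof (lin_left D e p m x Hc Hp Hx Hxm). fold s1 in H.
      pose proof (INR_diff1 _ _ Hxm).
      assert ((t - s1) * 1 <= (t - s1) * (INR m - INR x)) by (apply Rmult_le_compat_l; unfold t; lra).
      unfold t in *. nra.
    - pose proof (lin_right D e m s x Hc Hs Hx Hmx). fold s2 in H.
      pose proof (INR_diff1 _ _ Hmx).
      assert ((s2 - t) * 1 <= (s2 - t) * (INR x - INR m)) by (apply Rmult_le_compat_l; unfold t; lra).
      unfold t in *. nra. }
  assert (Hin : in_Omega D f h).
  { split.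
    - apply max_convex; auto. apply affine_convex.
    - intros x Hx. unfold h. apply Rmax_lub; auto.
      destruct (Nat.eq_dec x m) as [->|Hne].
      + unfold L. lra.
      + eapply Rle_trans; [apply HL|apply Hle]; auto. }
  pose proof (Hmax h Hin m Hm). unfold h in H.
  pose proof (Rmax_r (e m) (L m)). assert (L m = e m + d) by (unfold L; ring). lra.
Qed.

Lemma G1 D f e (g2 : nat -> R) : envp D f e ->
  (forall eps : R, eps > 0 -> exists N : nat, forall n, D n -> (n >= N)%nat ->
       Rabs (g2 n / INR n) < eps) ->
  (forall N : nat, exists n, D n /\ (n >= N)%nat /\ f n <= g2 n) ->
  forall a b, D a -> D b -> (a < b)%nat -> slope e a b <= 0.
Proof.
  intros [Hc [Hle Hmax]] Hg2 Hio a b Ha Hb Hab.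
  destruct (Rle_or_lt (slope e a b) 0) as [|Hpos]; auto. exfalso.
  set (sg := slope e a b) in *.
  destruct (Hg2 (sg/2) ltac:(lra)) as [N HN].
  destruct (nat_large ((sg * INR a - e a) * 2 / sg)) as [N2 HN2].
  destruct (Hio (N + N2 + b + 1)%nat) as [n [Hn [Hnge Hfn]]].
  assert (Hbn : (b < n)%nat) by lia.
  pose proof (INR_lt _ _ Hbn). pose proof (INR_lt _ _ Hab). pose proof (pos_INR a).
  specialize (HN n Hn ltac:(lia)). specialize (HN2 n ltac:(lia)).
  pose proof (sl_left D e a b n Hc Ha Hb Hn Hab Hbn). fold sg in H2.
  pose proof (slope_eq e a n ltac:(lia)).
  assert (Hg : g2 n < sg / 2 * INR n).
  { apply Rabs_def2 in HN. destruct HN as [HN _].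
    apply Rmult_lt_compat_r with (r := INR n) in HN; [|lra].
    replace (g2 n / INR n * INR n) with (g2 n) in HN by (field; lra). lra. }
  pose proof (Hle n Hn).
  assert (sg * INR a - e a <= sg / 2 * INR n).
  { apply Rmult_le_compat_l with (r := sg/2) in HN2; [|lra].
    replace (sg / 2 * ((sg * INR a - e a) * 2 / sg)) with (sg * INR a - e a) in HN2 by (field; lra).
    lra. }
  assert (sg * (INR n - INR a) <= slope e a n * (INR n - INR a))
    by (apply Rmult_le_compat_r; lra).
  lra.
Qed.

Lemma noninc D e : (forall a b, D a -> D b -> (a < b)%nat -> slope e a b <= 0) ->
  forall a b, D a -> D b -> (a <= b)%nat -> e b <= e a.
Proof.
  intros Hs a b Ha Hb Hab. destruct (Nat.eq_dec a b) as [->|Hne]; [lra|].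
  assert (Hlt : (a < b)%nat) by lia. pose proof (INR_lt _ _ Hlt).
  rewrite (slope_eq e a b Hlt). pose proof (Hs a b Ha Hb Hlt).
  assert (slope e a b * (INR b - INR a) <= 0) by (assert (0 <= - slope e a b * (INR b - INR a)) by (apply Rmult_le_pos; lra); lra). lra.
Qed.

Lemma Z0 D f e (c : R) : envp D f e ->
  (forall a b, D a -> D b -> (a < b)%nat -> slope e a b <= 0) ->
  (forall x, D x -> c <= e x) ->
  (forall M : R, exists N : nat, forall n, D n -> (n >= N)%nat -> f n >= M) ->
  (forall N, exists n, D n /\ (n >= N)%nat) ->
  exists z0, D z0 /\ forall x, D x -> (z0 <= x)%nat -> e x = e z0.
Proof.
  intros HE Hsl Hc Hfl Hinf. pose proof HE as [Hcv [Hle Hmax]].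
  set (E := fun y => exists x, D x /\ y = - e x).
  assert (HB : bound E) by (exists (-c); intros y [x [Hx ->]]; specialize (Hc x Hx); lra).
  destruct (Hinf 0%nat) as [w [Hw _]].
  assert (HEx : exists y, E y) by (exists (- e w); exists w; auto).
  destruct (completeness E HB HEx) as [L [HLub HLl]].
  assert (Hlo : forall x, D x -> - L <= e x).
  { intros x Hx. assert (- e x <= L) by (apply HLub; exists x; auto). lra. }
  destruct (classic (exists z0, D z0 /\ e z0 <= - L)) as [[z0 [Hz0 Hez]]|Hno].
  - exists z0; split; auto. intros x Hx Hzx.
    pose proof (noninc D e Hsl z0 x Hz0 Hx Hzx). pose proof (Hlo x Hx). lra.
  - exfalso.
    assert (Hgt : forall x, D x -> - L < e x).
    { intros x Hx. destruct (Rle_or_lt (e x) (-L)); auto. exfalso; apply Hno; eauto. }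
    destruct (Hfl (-L + 1)) as [N HN].
    destruct (Hinf N) as [N' [HN' HN'ge]].
    set (eps := Rmin 1 (e N' - - L)).
    assert (Heps : 0 < eps) by (unfold eps; apply Rmin_glb_lt; [lra|specialize (Hgt N' HN'); lra]).
    assert (He1 : eps <= 1) by apply Rmin_l.
    assert (He2 : eps <= e N' - - L) by apply Rmin_r.
    set (h := fun x => Rmax (e x) ((- L + eps) + 0 * INR x)).
    assert (Hin : in_Omega D f h).
    { split.
      - apply max_convex; auto. apply affine_convex.
      - intros x Hx. unfold h. apply Rmax_lub; auto.
        destruct (le_lt_dec N x) as [Hge|Hlt].
        + specialize (HN x Hx Hge). lra.
        + pose proof (noninc D e Hsl x N' Hx HN' ltac:(lia)). pose proof (Hle x Hx). lra. }
    assert (HU : is_upper_bound E (- (- L + eps))).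
    { intros y [x [Hx ->]]. pose proof (Hmax h Hin x Hx). unfold h in H.
      pose proof (Rmax_r (e x) (- L + eps + 0 * INR x)). lra. }
    pose proof (HLl _ HU). lra.
Qed.

Lemma vbound D f e z0 : D z0 -> (forall x, D x -> (z0 <= x)%nat -> e x = e z0) ->
  forall m, vertex D f e m -> (m <= z0)%nat.
Proof.
  intros Hz Hconst m [[Hm Hmin]|[Hm [Hef [p [s [Hp [Hs Hne]]]]]]].
  - apply Hmin; auto.
  - destruct (le_lt_dec m z0) as [|Hlt]; auto. exfalso.
    destruct Hp as [Hp1 [_ [Hpm Hpno]]]. destruct Hs as [_ [Hs1 [Hms _]]].
    assert (Hzp : (z0 <= p)%nat) by (destruct (le_lt_dec z0 p); auto; exfalso; apply (Hpno z0); auto).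
    apply Hne. unfold slope.
    rewrite (Hconst p Hp1 Hzp), (Hconst m Hm ltac:(lia)), (Hconst s Hs1 ltac:(lia)).
    unfold Rminus at 1 3. rewrite !Rplus_opp_r. unfold Rdiv. ring.
Qed.

Lemma G2 D f e z0 mk s : envp D f e -> D z0 ->
  (forall x, D x -> (z0 <= x)%nat -> e x = e z0) ->
  (forall N, exists n, D n /\ (n >= N)%nat) ->
  vertex D f e mk -> (forall m, vertex D f e m -> (m <= mk)%nat) ->
  D_succ D mk s -> slope e mk s = 0.
Proof.
  intros HE Hz Hconst Hinf Hvk Hlast Hsucc. pose proof HE as [Hc [Hle Hmax]].
  set (sg := slope e mk s).
  pose proof Hsucc as [Hmk [Hs [Hms Hno]]].
  assert (Hge : forall x, D x -> (mk < x)%nat -> sg <= slope e mk x).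
  { intros x Hx Hmx. assert (Hsx : (s <= x)%nat)
      by (destruct (le_lt_dec s x); auto; exfalso; apply (Hno x); auto).
    destruct (Nat.eq_dec s x) as [->|]; [unfold sg; lra|].
    apply (sl_left D e mk s x Hc Hmk Hs Hx Hms ltac:(lia)). }
  assert (HA : forall x, D x -> (mk < x)%nat -> slope e mk x = sg).
  { intros x Hx Hmx. destruct (Rle_lt_or_eq_dec _ _ (Hge x Hx Hmx)) as [Hlt|]; auto. exfalso.
    destruct (least_nat (fun x => D x /\ (mk < x)%nat /\ sg < slope e mk x)
       ltac:(exists x; auto)) as [x1 [[Hx1 [Hmx1 Hlt1]] Hmin]].
    assert (Heq : forall y, D y -> (mk < y)%nat -> (y < x1)%nat -> slope e mk y = sg).
    { intros y Hy Hmy Hyx. destruct (Rle_lt_or_eq_dec _ _ (Hge y Hy Hmy)) as [Hl|]; auto.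
      specialize (Hmin y (conj Hy (conj Hmy Hl))). lia. }
    assert (Hsx1 : (s < x1)%nat).
    { assert (Hsx : (s <= x1)%nat)
        by (destruct (le_lt_dec s x1); auto; exfalso; apply (Hno x1); auto).
      destruct (Nat.eq_dec s x1) as [<-|]; [|lia]. unfold sg in Hlt1. lra. }
    destruct (pred_ex D s x1 Hs Hx1 Hsx1) as [p [Hpx1 Hsp]].
    pose proof Hpx1 as [Hp [_ [Hpx1lt Hpno]]].
    assert (Hmp : (mk < p)%nat) by lia.
    assert (Hslp : slope e mk p = sg) by (apply Heq; auto).
    destruct (pred_ex D mk p Hmk Hp Hmp) as [q [Hqp Hmq]].
    pose proof Hqp as [Hq [_ [Hqplt _]]].
    assert (Hsqp : slope e q p = sg).
    { destruct (Nat.eq_dec mk q) as [<-|Hne]; auto.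
      assert (Hslq : slope e mk q = sg) by (apply Heq; auto; lia).
      pose proof (slope_eq e mk q ltac:(lia)). pose proof (slope_eq e mk p Hmp).
      rewrite Hslq in H. rewrite Hslp in H0.
      pose proof (INR_lt _ _ Hqplt).
      unfold slope. rewrite H, H0. field. lra. }
    pose proof (sl_right D e mk p x1 Hc Hmk Hp Hx1 Hmp Hpx1lt).
    assert (Hk : slope e q p < slope e p x1) by lra.
    pose proof (Kink D f e q p x1 HE Hqp Hpx1 Hk) as Hefp.
    assert (Hvp : vertex D f e p).
    { right. refine (conj Hp (conj Hefp _)). exists q, x1.
      split; [exact Hqp|split; [exact Hpx1|apply Rlt_not_eq; exact Hk]]. }
    specialize (Hlast p Hvp). lia. }
  destruct (Hinf (z0 + mk + 1)%nat) as [x [Hx Hxge]].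
  destruct (Hinf (x + 1)%nat) as [x' [Hx' Hx'ge]].
  pose proof (Hconst x Hx ltac:(lia)). pose proof (Hconst x' Hx' ltac:(lia)).
  pose proof (slope_eq e mk x ltac:(lia)). pose proof (slope_eq e mk x' ltac:(lia)).
  rewrite (HA x Hx ltac:(lia)) in H1. rewrite (HA x' Hx' ltac:(lia)) in H2.
  assert (Hxx : (x < x')%nat) by lia. pose proof (INR_lt _ _ Hxx).
  assert (sg * (INR x' - INR x) = 0) by nra.
  apply Rmult_integral in H4. destruct H4; [auto|lra].
Qed.

Lemma enum D f e N : (forall m, vertex D f e m -> (m <= N)%nat) ->
  forall m, vertex D f e m -> exists r (v : nat -> nat), v 0%nat = m /\
    (forall i, (i < r)%nat -> consec_vertices D f e (v i) (v (S i))) /\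
    (forall i, (i <= r)%nat -> vertex D f e (v i)) /\
    (forall x, vertex D f e x -> (m <= x)%nat -> exists i, (i <= r)%nat /\ x = v i) /\
    (forall x, vertex D f e x -> (x <= v r)%nat).
Proof.
  intros HN.
  assert (Hgen : forall d m, (N - m <= d)%nat -> vertex D f e m -> exists r (v : nat -> nat), v 0%nat = m /\
    (forall i, (i < r)%nat -> consec_vertices D f e (v i) (v (S i))) /\
    (forall i, (i <= r)%nat -> vertex D f e (v i)) /\
    (forall x, vertex D f e x -> (m <= x)%nat -> exists i, (i <= r)%nat /\ x = v i) /\
    (forall x, vertex D f e x -> (x <= v r)%nat)).
  2:{ intros m; apply (Hgen (N - m)%nat m); auto. }
  induction d as [|d IH]; intros m Hd Hv.
  - exists 0%nat, (fun _ => m). split; auto. split; [intros; lia|]. split; [auto|].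
    split.
    + intros x Hx Hmx. exists 0%nat. split; auto. pose proof (HN x Hx). pose proof (HN m Hv). lia.
    + intros x Hx. pose proof (HN x Hx). pose proof (HN m Hv). lia.
  - destruct (classic (exists x, vertex D f e x /\ (m < x)%nat)) as [Hex|Hno].
    + destruct (least_nat _ Hex) as [m' [[Hv' Hmm'] Hmin]].
      pose proof (HN m' Hv').
      destruct (IH m' ltac:(lia) Hv') as [r [v [Hv0 [Hcons [Hvert [Hcov Hlast]]]]]].
      exists (S r), (fun i => match i with O => m | S j => v j end).
      split; auto. split; [|split; [|split]].
      * intros [|i] Hi.
        -- rewrite Hv0. split; auto. split; auto. split; auto.
           intros x Hx [H1 H2]. specialize (Hmin x (conj Hx H1)). lia.
        -- apply Hcons. lia.
      * intros [|i] Hi; auto. apply Hvert; lia.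
      * intros x Hx Hmx. destruct (Nat.eq_dec m x) as [<-|Hne].
        -- exists 0%nat; split; auto; lia.
        -- assert (Hlt : (m < x)%nat) by lia. specialize (Hmin x (conj Hx Hlt)).
           destruct (Hcov x Hx Hmin) as [i [Hi ->]]. exists (S i); split; auto; lia.
      * exact Hlast.
    + exists 0%nat, (fun _ => m). split; auto. split; [intros; lia|]. split; [auto|].
      split.
      * intros x Hx Hmx. exists 0%nat. split; auto.
        destruct (Nat.eq_dec m x); auto. exfalso; apply Hno; exists x; split; auto; lia.
      * intros x Hx. destruct (le_lt_dec x m); auto. exfalso; apply Hno; eauto.
Qed.

Lemma vertex_D D f e m : vertex D f e m -> D m.
Proof. intros [[H _]|[H _]]; auto. Qed.

Lemma vertex_ef D f e m : envp D f e -> vertex D f e m -> e m = f m.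
Proof. intros HE [Hm|[_ [H _]]]; auto. eapply Kmin; eauto. Qed.

Lemma kink_lt D f e m a b : convex_on D e -> vertex D f e m -> D a -> (a < m)%nat ->
  D b -> (m < b)%nat -> slope e a m < slope e m b.
Proof.
  intros Hc [[Hm Hmin]|[Hm [_ [p [s [Hp [Hs Hne]]]]]]] Ha Ham Hb Hmb.
  - specialize (Hmin a Ha). lia.
  - pose proof Hp as [Hp1 [_ [Hpm Hpno]]]. pose proof Hs as [_ [Hs1 [Hms Hsno]]].
    assert (Hap : (a <= p)%nat) by (destruct (le_lt_dec a p); auto; exfalso; apply (Hpno a); auto).
    assert (Hsb : (s <= b)%nat) by (destruct (le_lt_dec s b); auto; exfalso; apply (Hsno b); auto).
    pose proof (sl_mid D e p m s Hc Hp1 Hm Hs1 Hpm Hms).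
    assert (Hlt : slope e p m < slope e m s) by (destruct H; auto; contradiction).
    assert (H1 : slope e a m <= slope e p m).
    { destruct (Nat.eq_dec a p) as [->|]; [lra|]. apply (sl_right D e a p m Hc Ha Hp1 Hm); lia. }
    assert (H2 : slope e m s <= slope e m b).
    { destruct (Nat.eq_dec s b) as [->|]; [lra|]. apply (sl_left D e m s b Hc Hm Hs1 Hb); lia. }
    lra.
Qed.

Lemma fin_lb (f : nat -> R) : forall K, exists c, forall n, (n < K)%nat -> c <= f n.
Proof.
  induction K as [|K [c Hc]].
  - exists 0. intros; lia.
  - exists (Rmin c (f K)). intros n Hn. destruct (Nat.eq_dec n K) as [->|]; [apply Rmin_r|].
    eapply Rle_trans; [apply Rmin_l|apply Hc; lia].
Qed.

Theorem lemma4 (D : nat -> Prop) (g1 g2 f : nat -> R) (n0 : nat) :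
  (forall n, D n -> g2 n >= g1 n) ->
  (forall M : R, exists N : nat, forall n, D n -> (n >= N)%nat -> g1 n >= M) ->
  (forall eps : R, eps > 0 -> exists N : nat, forall n, D n -> (n >= N)%nat ->
       Rabs (g2 n / INR n) < eps) ->
  D n0 ->
  (forall n, D n -> (n >= n0)%nat -> f n >= g1 n) ->
  (forall N : nat, exists n, D n /\ (n >= N)%nat /\ f n <= g2 n) ->
  Omega_nonempty D f /\
  (exists e, is_envelope D f e) /\
  (forall e, is_envelope D f e ->
     exists (k : nat) (a : nat -> R),
       (1 <= k)%nat /\
       (forall i, (1 <= i)%nat -> (i < k)%nat -> a i < a (S i)) /\
       a k = 0 /\
       (forall s, slope_set D f e s <-> exists i, (1 <= i <= k)%nat /\ s = a i)).
Proof.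
  intros Hg12 Hg1 Hg2 Hn0 Hfg1 Hio.
  assert (Hinf : forall N, exists n, D n /\ (n >= N)%nat).
  { intros N. destruct (Hio N) as [n [? [? _]]]. eauto. }
  assert (Hfl : forall M : R, exists N : nat, forall n, D n -> (n >= N)%nat -> f n >= M).
  { intros M. destruct (Hg1 M) as [N HN]. exists (N + n0)%nat. intros n Hn Hge.
    specialize (HN n Hn ltac:(lia)). specialize (Hfg1 n Hn ltac:(lia)). lra. }
  assert (Hlb : exists c, forall x, D x -> c <= f x).
  { destruct (Hfl 0) as [N HN]. destruct (fin_lb f N) as [c Hc].
    exists (Rmin c 0). intros x Hx. destruct (le_lt_dec N x) as [Hge|Hlt].
    - specialize (HN x Hx Hge). pose proof (Rmin_r c 0). lra.
    - specialize (Hc x Hlt). pose proof (Rmin_l c 0). lra. }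
  destruct Hlb as [c Hc].
  assert (HcO : in_Omega D f (fun x => c + 0 * INR x)).
  { split; [apply affine_convex|]. intros x Hx. specialize (Hc x Hx). lra. }
  split; [exists (fun x => c + 0 * INR x); exact HcO|].
  split.
  { assert (Hex : forall x, exists y, D x ->
        is_lub (fun y => exists h, in_Omega D f h /\ y = h x) y).
    { intros x. destruct (classic (D x)) as [Hx|Hx]; [|exists 0; intros; contradiction].
      assert (HB : bound (fun y => exists h, in_Omega D f h /\ y = h x)).
      { exists (f x). intros y [h [Hh ->]]. apply (proj2 Hh); auto. }
      assert (HE : exists y, (fun y => exists h, in_Omega D f h /\ y = h x) y).
      { exists (c + 0 * INR x). exists (fun x => c + 0 * INR x). auto. }
      destruct (completeness _ HB HE) as [y Hy]. exists y; auto. }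
    exists (fun x => proj1_sig (constructive_indefinite_description _ (Hex x))).
    intros x Hx. exact (proj2_sig (constructive_indefinite_description _ (Hex x)) Hx). }
  intros e He. pose proof (env_props D f e He) as HE. pose proof HE as [Hcv [Hle Hmax]].
  pose proof (G1 D f e g2 HE Hg2 Hio) as Hsl.
  assert (Hce : forall x, D x -> c <= e x).
  { intros x Hx. pose proof (Hmax _ HcO x Hx). simpl in H. lra. }
  destruct (Z0 D f e c HE Hsl Hce Hfl Hinf) as [z0 [Hz0 Hconst]].
  pose proof (vbound D f e z0 Hz0 Hconst) as Hvb.
  destruct (least_nat D (ex_intro _ n0 Hn0)) as [x0 [Hx0 Hx0min]].
  assert (Hvx0 : vertex D f e x0) by (left; split; auto).
  destruct (enum D f e z0 Hvb x0 Hvx0) as [r [v [Hv0 [Hcons [Hvert [Hcov Hlast]]]]]].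
  assert (Hvinc : forall i, (i < r)%nat -> (v i < v (S i))%nat)
    by (intros i Hi; destruct (Hcons i Hi) as [_ [_ [? _]]]; auto).
  set (a := fun i => if Nat.leb i r then slope e (v (pred i)) (v i) else 0).
  assert (Ha1 : forall i, (1 <= i <= r)%nat -> a i = slope e (v (pred i)) (v i)).
  { intros i Hi. unfold a. destruct (Nat.leb_spec i r); [auto|lia]. }
  assert (Hak : a (S r) = 0).
  { unfold a. destruct (Nat.leb_spec (S r) r); [lia|auto]. }
  assert (HDv : forall i, (i <= r)%nat -> D (v i)) by (intros; eapply vertex_D; apply Hvert; auto).
  exists (S r), a. split; [lia|]. split; [|split; [exact Hak|]].
  - intros i Hi1 Hik. destruct i as [|j]; [lia|]. rewrite (Ha1 (S j)) by lia. simpl pred.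
    destruct (le_lt_dec (S (S j)) r) as [Hle2|Hgt].
    + rewrite (Ha1 (S (S j))) by lia. simpl pred.
      apply (kink_lt D f e); auto; try (apply HDv; lia); try (apply Hvinc; lia).
      apply Hvert; lia.
    + assert (Hj : S j = r) by lia. rewrite Hj, Hak.
      destruct (succ_ex D (v (S j)) Hinf (HDv (S j) ltac:(lia))) as [s' Hs'].
      pose proof Hs' as [_ [Hs'D [Hs'lt _]]].
      pose proof (kink_lt D f e (v (S j)) (v j) s' Hcv (Hvert (S j) ltac:(lia))
        (HDv j ltac:(lia)) (Hvinc j ltac:(lia)) Hs'D Hs'lt).
      pose proof (Hsl (v (S j)) s' (HDv (S j) ltac:(lia)) Hs'D Hs'lt). rewrite <- Hj. lra.
  - intros s. split.
    + intros [[m [m' [Hc' ->]]]|[Hvf [mk [s' [Hvk [Hlk [Hsu ->]]]]]]].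
      * destruct Hc' as [Hvm [Hvm' [Hmm' Hbet]]].
        destruct (Hcov m Hvm (Hx0min m (vertex_D _ _ _ _ Hvm))) as [i [Hi ->]].
        destruct (Nat.eq_dec i r) as [->|Hne]; [specialize (Hlast m' Hvm'); lia|].
        assert (Hm' : m' = v (S i)).
        { destruct (Nat.lt_total m' (v (S i))) as [Hlt|[Heq|Hgt]]; auto.
          - exfalso. destruct (Hcons i ltac:(lia)) as [_ [_ [_ Hb]]]. apply (Hb m' Hvm'); lia.
          - exfalso. assert (HSi : (S i <= r)%nat) by lia. apply (Hbet (v (S i)) (Hvert (S i) HSi)). split; [apply Hvinc; lia|lia]. }
        subst m'. exists (S i). split; [lia|]. rewrite Ha1 by lia. simpl pred.
        unfold slope. rewrite (vertex_ef D f e _ HE Hvm), (vertex_ef D f e _ HE Hvm'). reflexivity.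
      * exists (S r). split; [lia|]. rewrite Hak.
        exact (G2 D f e z0 mk s' HE Hz0 Hconst Hinf Hvk Hlk Hsu).
    + intros [i [Hi ->]]. destruct (le_lt_dec i r) as [Hir|Hir].
      * left. destruct i as [|j]; [lia|]. exists (v j), (v (S j)). split; [apply Hcons; lia|].
        rewrite Ha1 by lia. simpl pred. unfold slope.
        rewrite (vertex_ef D f e _ HE (Hvert j ltac:(lia))),
          (vertex_ef D f e _ HE (Hvert (S j) ltac:(lia))). reflexivity.
      * right. assert (Hi' : i = S r) by lia. subst i. rewrite Hak. split; [exists (v r); exact Hlast|].
        destruct (succ_ex D (v r) Hinf (HDv r (le_n r))) as [s' Hs'].
        exists (v r), s'. split; [apply Hvert; lia|]. split; [exact Hlast|]. split; [exact Hs'|].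
        symmetry. exact (G2 D f e z0 (v r) s' HE Hz0 Hconst Hinf (Hvert r (le_n r)) Hlast Hs').
Qed.
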